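(* Let $A\in\mathbb{C}^{n\times n}$, $C\in\mathbb{C}^{1\times n}$, $j\in\mathbb{N}$, and let $s=\{s_1,\dots,s_j\}\subset\mathbb{C}\setminus\Lambda(A^* )$ be a multiset of $j$ finite poles (so $\infty\notin s$). Assume the rational Krylov subspace $\mathcal{K}_j(A^*,C^*,s)$ is $A^*$-variant. Then there exists a rational Arnoldi decomposition $$A^*V_{j+1}\underline{K_j}=V_{j+1}\underline{H_j}$$ associated to $\mathcal{K}_j(A^*,C^*,s)$ such that $\underline{K_j}=\begin{bmatrix}0\\ I_j\end{bmatrix}\in\mathbb{C}^{(j+1)\times j}$, $\underline{H_j}=\begin{bmatrix}h_j\\ H_{-j}\end{bmatrix}$ with $h_j\in\mathbb{C}^{1\times j}$ and $H_{-j}\in\mathbb{C}^{j\times j}$ upper triangular, and $V_{j+1}=\begin{bmatrix}C^*& Z_j\end{bmatrix}$, where $Z_j\in\mathbb{C}^{n\times j}$ is a basis of $\mathcal{K}_j(A^*,C^*,s)$.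
   Context: Notation: $\Pi_k$ is the set of complex polynomials of degree at most $k$; $\Lambda(M)$ is the spectrum of $M$; $M^*$ is the conjugate transpose. For $M\in\mathbb{C}^{n\times n}$, $b\in\mathbb{C}^n$, $j\in\mathbb{N}$ and a multiset $s=\{s_1,\dots,s_j\}\subset(\mathbb{C}\cup\{\infty\})\setminus\Lambda(M)$, put $q(x)=\prod_{i:\,s_i\neq\infty}(x-s_i)$; the rational Krylov subspace of order $j$ with poles $s$ is $\mathcal{K}_j(M,b,s)=\{q(M)^{-1}p(M)b : p\in\Pi_{j-1}\}$, and the augmented Krylov subspace is $\mathcal{K}_j^+(M,b,s)=\mathcal{K}_{j+1}(M,b,s\cup\{\infty\})$. A subspace $\mathcal{V}$ is called $M$-variant if $M\mathcal{V}\not\subseteq\mathcal{V}$. A rational Arnoldi decomposition (RAD) is a relation $MV_{j+1}\underline{K_j}=V_{j+1}\underline{H_j}$ with $V_{j+1}\in\mathbb{C}^{n\times(j+1)}$ of full column rank, $\underline{K_j},\underline{H_j}\in\mathbb{C}^{(j+1)\times j}$ upper Hessenberg, such that the lower $j\times j$ subpencil $(H_{-j},K_{-j})$ (rows $2,\dots,j+1$) is regular and its generalized eigenvalues, called the poles of the decomposition, lie outside $\Lambda(M)$. The RAD is associated to $\mathcal{K}_j(M,b,s)$ if its poles are $s$, $V_{j+1}e_1$ is a nonzero multiple of $b$, $\operatorname{span}(V_{j+1})=\mathcal{K}_j^+(M,b,s)$ and $\operatorname{span}(V_{j+1}\underline{K_j})=\mathcal{K}_j(M,b,s)$. *)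

(* Defs.v *)
(* Complex matrices are modelled over an arbitrary
   numClosedFieldType F (e.g. algC, or complex R); "^*" is its conjugation. *)
From mathcomp Require Import all_boot all_order all_algebra.
Set Implicit Arguments. Unset Strict Implicit. Unset Printing Implicit Defensive.
Import Order.TTheory GRing.Theory Num.Theory.
Local Open Scope ring_scope.

Section RAD.
Variable F : numClosedFieldType.

Definition ctrmx m n (M : 'M[F]_(m, n)) : 'M[F]_(n, m) := map_mx Num.conj M^T.

Definition peval n (M : 'M[F]_n) (p : {poly F}) : 'M[F]_n :=
  \sum_(i < size p) p`_i *: M ^+ i.

(* q(M) = prod over the finite poles (None = infinity) of (M - s_i I) *)
Definition qmat n (M : 'M[F]_n) (s : seq (option F)) : 'M[F]_n :=
  \prod_(x <- s) (if x is Some z then M - z%:M else 1%:M).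

Definition rkrylov n (M : 'M[F]_n) (b : 'cV[F]_n) (s : seq (option F))
  (v : 'cV[F]_n) : Prop :=
  exists p : {poly F}, (size p <= size s)%N /\
    v = invmx (qmat M s) *m peval M p *m b.

(* augmented Krylov space K_j^+(M,b,s) = K_{j+1}(M,b,s u {oo}) *)
Definition rkrylov_aug n (M : 'M[F]_n) (b : 'cV[F]_n) (s : seq (option F)) :=
  rkrylov M b (None :: s).

Definition colspan_is n k (W : 'M[F]_(n, k)) (P : 'cV[F]_n -> Prop) : Prop :=
  forall v, P v <-> exists x : 'cV[F]_k, v = W *m x.

Definition variant n (M : 'M[F]_n) (P : 'cV[F]_n -> Prop) : Prop :=
  ~ (forall v, P v -> P (M *m v)).

Definition upper_hessenberg j (H : 'M[F]_(j.+1, j)) : Prop :=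
  forall (i : 'I_j.+1) (k : 'I_j), (k.+1 < i)%N -> H i k = 0.

Definition upper_triangular j (H : 'M[F]_j) : Prop :=
  forall i k : 'I_j, (k < i)%N -> H i k = 0.

Definition lowerblk j (H : 'M[F]_(j.+1, j)) : 'M[F]_j := @dsubmx F 1 j j H.

Definition pencil_poly j (H K : 'M[F]_j) : {poly F} :=
  \det (\matrix_(a, b) ((H a b)%:P - 'X * (K a b)%:P)).

Definition regular_pencil j (H K : 'M[F]_j) : Prop := pencil_poly H K != 0.

(* the generalized eigenvalues of the regular j x j pencil (H,K), counted with
   multiplicity, are exactly the (finite) multiset s of size j:
   det(H - zK) = c * prod (z - s_i), c <> 0 (degree j, so no infinite ones). *)
Definition pencil_poles_are j (H K : 'M[F]_j) (s : seq F) : Prop :=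
  size s = j /\
  exists2 c : F, c != 0 & pencil_poly H K = c *: \prod_(x <- s) ('X - x%:P).

Definition is_RAD n j (M : 'M[F]_n) (V : 'M[F]_(n, j.+1))
  (K H : 'M[F]_(j.+1, j)) : Prop :=
  [/\ M *m V *m K = V *m H,
      \rank V = j.+1,
      upper_hessenberg K /\ upper_hessenberg H,
      regular_pencil (lowerblk H) (lowerblk K) &
      forall z, root (pencil_poly (lowerblk H) (lowerblk K)) z ->
        ~~ eigenvalue M z].

Definition RAD_associated n j (M : 'M[F]_n) (b : 'cV[F]_n) (s : seq F)
  (V : 'M[F]_(n, j.+1)) (K H : 'M[F]_(j.+1, j)) : Prop :=
  [/\ is_RAD M V K H,
      pencil_poles_are (lowerblk H) (lowerblk K) s,
      (exists2 a : F, a != 0 & col 0 V = a *: b),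
      colspan_is V (rkrylov_aug M b (map Some s)) &
      colspan_is (V *m K) (rkrylov M b (map Some s))].

End RAD.

(* Main.v *)
Require Import Defs.
From mathcomp Require Import all_boot all_order all_algebra.
Import Order.TTheory GRing.Theory Num.Theory.
Local Open Scope ring_scope.

Section Aux.
Variable F : numClosedFieldType.
Variable n : nat.
Implicit Types (M : 'M[F]_n.+1) (p q : {poly F}).

Lemma peval_horner M p : peval M p = horner_mx M p.
Proof.
have -> : horner_mx M p = horner_mx M (\poly_(i < size p) p`_i) by rewrite coefK.
rewrite poly_def raddf_sum /=; apply: eq_bigr => i _.
by rewrite linearZ /= rmorphXn /= horner_mx_X.
Qed.

Lemma qmat_horner M (t : seq F) :
  qmat M (map Some t) = horner_mx M (\prod_(x <- t) ('X - x%:P)).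
Proof.
rewrite /qmat big_map rmorph_prod; apply: eq_bigr => x _.
by rewrite rmorphB /= horner_mx_X horner_mx_C.
Qed.

Lemma qmat_None M l : qmat M (None :: l) = qmat M l.
Proof. by rewrite /qmat big_cons mul1r. Qed.

Lemma unit_sub M z : ~~ eigenvalue M z -> M - z%:M \in unitmx.
Proof.
move=> hz; rewrite -row_free_unit; apply: inj_row_free => v hv.
apply/eqP; apply: contraR hz => v0; apply/eigenvalueP; exists v => //.
by move: hv; rewrite mulmxBr mul_mx_scalar => /eqP; rewrite subr_eq0 => /eqP.
Qed.

Lemma unit_Q M (t : seq F) : (forall z, z \in t -> ~~ eigenvalue M z) ->
  horner_mx M (\prod_(x <- t) ('X - x%:P)) \in unitmx.
Proof.
elim: t => [|x t IH] ht; first by rewrite big_nil rmorph1 unitmx1.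
rewrite big_cons rmorphM /= -mulmxE unitmx_mul IH ?andbT.
  by rewrite rmorphB /= horner_mx_X horner_mx_C unit_sub // ht ?mem_head.
by move=> z hz; apply: ht; rewrite inE hz orbT.
Qed.

Lemma rank_inj m (W : 'M[F]_(n.+1, m)) :
  (forall x : 'cV_m, W *m x = 0 -> x = 0) -> \rank W = m.
Proof.
move=> hW; rewrite -mxrank_tr; apply/eqP; apply: inj_row_free => v hv.
have : W *m v^T = 0 by rewrite -(trmxK (W *m v^T)) trmx_mul trmxK hv trmx0.
by move/hW => /(congr1 trmx); rewrite trmxK trmx0.
Qed.

End Aux.

Section Poly.
Variable F : numClosedFieldType.

Definition Dpoly (t : seq F) (k : nat) : {poly F} := \prod_(x <- drop k t) ('X - x%:P).

Lemma size_Dpoly t k : size (Dpoly t k) = (size t - k).+1.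
Proof. by rewrite /Dpoly size_prod_XsubC size_drop. Qed.

Lemma Dpoly_cons a t k : Dpoly (a :: t) k.+1 = Dpoly t k.
Proof. by []. Qed.

Lemma Dpoly_top t : (Dpoly t 0)`_(size t) = 1.
Proof.
have hl : Dpoly t 0 \is monic by apply: monic_prod_XsubC.
by move/monicP: hl; rewrite lead_coefE size_Dpoly subn0.
Qed.

Lemma Dpoly_rec t k : (k < size t)%N -> Dpoly t k = ('X - (t`_k)%:P) * Dpoly t k.+1.
Proof. by move=> hk; rewrite /Dpoly (drop_nth 0 hk) big_cons. Qed.

Lemma coef_Dsum t (c : nat -> F) i : ((size t).+1 <= i)%N ->
  (\sum_(k < (size t).+1) c k *: Dpoly t k)`_i = 0.
Proof.
move=> hi; rewrite coef_sum big1 // => k _; rewrite coefZ nth_default ?mulr0 //.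
by rewrite size_Dpoly (leq_trans _ hi) // ltnS leq_subr.
Qed.

Lemma size_Dsum t (c : nat -> F) :
  (size (\sum_(k < (size t).+1) c k *: Dpoly t k)%R <= (size t).+1)%N.
Proof. by apply/leq_sizeP => i hi; apply: coef_Dsum. Qed.

Lemma span_D t (p : {poly F}) : (size p <= (size t).+1)%N ->
  exists c : nat -> F, p = \sum_(k < (size t).+1) c k *: Dpoly t k.
Proof.
elim: t p => [|a t IH] p hp.
  exists (fun _ => p`_0); rewrite big_ord1 /Dpoly /= big_nil.
  by rewrite -mul_polyC mulr1 -size1_polyC.
pose c0 := p`_(size t).+1.
have hr : (size (p - c0 *: Dpoly (a :: t) 0)%R <= (size t).+1)%N.
  apply/leq_sizeP => i hi; rewrite coefB coefZ.
  move: hi; rewrite leq_eqVlt => /orP[/eqP <-|hi].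
    by rewrite (Dpoly_top (a :: t)) mulr1 subrr.
  rewrite !nth_default ?mulr0 ?subrr //; try (by rewrite size_Dpoly subn0); exact: leq_trans hp _.
have [c hc] := IH _ hr.
exists (fun k => if k is k'.+1 then c k' else c0).
rewrite big_ord_recl /=.
rewrite -[p](subrK (c0 *: Dpoly (a :: t) 0)) hc addrC; congr (_ + _).
Qed.

Lemma indep_D t (c : nat -> F) :
  \sum_(k < (size t).+1) c k *: Dpoly t k = 0 -> forall k, (k < (size t).+1)%N -> c k = 0.
Proof.
elim: t c => [|a t IH] c.
  rewrite big_ord1 /Dpoly /= big_nil => /eqP; rewrite scaler_eq0 oner_eq0 orbF.
  by move=> /eqP h [|k] //.
rewrite big_ord_recl.
under eq_bigr do rewrite lift0 Dpoly_cons.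
move=> hs.
have c00 : c 0%N = 0.
  have := congr1 (fun q : {poly F} => q`_(size t).+1) hs; rewrite /= coef0 coefD coefZ.
  rewrite (Dpoly_top (a :: t)) mulr1.
  by rewrite (coef_Dsum t (c \o S)) // addr0.
move: hs; rewrite c00 scale0r add0r.
move=> /(IH (c \o S)) h [|k] // hk; exact: h.
Qed.

Lemma sum_delta m (P : nat -> {poly F}) i : (i < m)%N ->
  \sum_(l < m) ((l : nat) == i)%:R *: P l = P i.
Proof.
move=> hi; rewrite (bigD1 (Ordinal hi)) //= eqxx scale1r big1 ?addr0 // => l hl.
by move: hl; rewrite -val_eqE /= => /negbTE ->; rewrite scale0r.
Qed.

End Poly.
Arguments Dpoly {F} t k.

Section Main.
Variable F : numClosedFieldType.
Variable n : nat.
Variable M : 'M[F]_n.+1.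
Variable b : 'cV[F]_n.+1.
Variable t : seq F.
Let Q := horner_mx M (\prod_(x <- t) ('X - x%:P)).
Hypothesis hQ : Q \in unitmx.

Definition phi (p : {poly F}) := invmx Q *m horner_mx M p *m b.

Lemma phi_D0 : phi (Dpoly t 0) = b.
Proof. by rewrite /phi /Dpoly drop0 -/Q mulVmx // mul1mx. Qed.

Lemma phi_sum (I : finType) (c : I -> F) (P : I -> {poly F}) :
  phi (\sum_(k : I) c k *: P k) = \sum_(k : I) c k *: phi (P k).
Proof.
rewrite /phi raddf_sum mulmx_sumr mulmx_suml; apply: eq_bigr => k _.
change (invmx Q *m horner_mx M (c k *: P k) *m b = c k *: (invmx Q *m horner_mx M (P k) *m b)).
by rewrite horner_mxZ -scalemxAr -scalemxAl.
Qed.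

Lemma phiD p q : phi (p + q) = phi p + phi q.
Proof. by rewrite /phi rmorphD mulmxDr mulmxDl. Qed.

Lemma phiZ c p : phi (c *: p) = c *: phi p.
Proof. by rewrite /phi linearZ /= -scalemxAr -scalemxAl. Qed.

Lemma phi_X p : M *m phi p = phi ('X * p).
Proof.
have cQ : M *m Q = Q *m M.
  exact: (comm_mx_horner _ (erefl (M *m M))).
have cQV : M *m invmx Q = invmx Q *m M.
  rewrite -[M *m invmx Q]mul1mx -(mulVmx hQ) -!mulmxA; congr (_ *m _).
  by rewrite mulmxA -cQ -mulmxA mulmxV // mulmx1.
rewrite /phi !mulmxA cQV -!mulmxA; congr (_ *m _).
by rewrite rmorphM /= horner_mx_X -mulmxE mulmxA.
Qed.

Lemma phi_mat m (P : nat -> {poly F}) (x : 'cV[F]_m.+1) :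
  (\matrix_(i < n.+1, k < m.+1) (phi (P k)) i 0) *m x
  = phi (\sum_(k < m.+1) x (inord k) 0 *: P k).
Proof.
rewrite phi_sum; apply/colP => i; rewrite !mxE summxE; apply: eq_bigr => k _.
by rewrite !mxE inord_val mulrC.
Qed.

Lemma phi0 p : phi p = 0 -> horner_mx M p *m b = 0.
Proof.
move=> h; have := congr1 (mulmx Q) h; rewrite mulmx0 /phi !mulmxA mulmxV //.
by rewrite mul1mx.
Qed.

Definition Kj (v : 'cV[F]_n.+1) := exists p : {poly F}, (size p <= size t)%N /\ v = phi p.

Lemma key (p : {poly F}) : p != 0 -> (size p <= (size t).+1)%N -> horner_mx M p *m b = 0 ->
  forall v, Kj v -> Kj (M *m v).
Proof.
move=> p0 hp hb v [q [hq ->]]; rewrite phi_X.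
exists (('X * q) %% p); split.
  by rewrite -ltnS (leq_trans _ hp) // ltn_modp.
rewrite {1}(divp_eq ('X * q) p) /phi rmorphD rmorphM /= mulmxDr mulmxDl.
by rewrite -mulmxE -!mulmxA hb !mulmx0 add0r.
Qed.

End Main.
Arguments phi {F n} M b t p.
Arguments Kj {F n} M b t v.


Definition Hmat {F : numClosedFieldType} (t : seq F) m : 'M[F]_m :=
  \matrix_(l, k) (((l : nat) == k)%:R * t`_k + ((l : nat).+1 == k)%:R).

Lemma Hmat_ut (F : numClosedFieldType) (t : seq F) m : upper_triangular (Hmat t m).
Proof.
move=> i k hki; rewrite mxE.
rewrite (_ : ((i : nat) == k) = false); last by apply/negbTE; rewrite neq_ltn hki orbT.
rewrite (_ : ((i : nat).+1 == k) = false); last first.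
  by apply/negbTE; rewrite neq_ltn (ltn_trans hki) ?orbT.
by rewrite mul0r addr0.
Qed.

Lemma pencil_Hmat (F : numClosedFieldType) (t : seq F) :
  pencil_poly (Hmat t (size t)) 1%:M = (-1) ^+ (size t) *: \prod_(x <- t) ('X - x%:P).
Proof.
rewrite /pencil_poly -det_tr det_trig; last first.
  apply/forallP => i; apply/forallP => k; apply/implyP => hik; rewrite !mxE.
  rewrite (_ : ((k : nat) == i) = false); last by apply/negbTE; rewrite neq_ltn hik orbT.
  rewrite (_ : ((k : nat).+1 == i) = false); last first.
    by apply/negbTE; rewrite neq_ltn (ltn_trans hik) ?orbT.
  rewrite (_ : (k == i) = false); last by apply/negbTE; rewrite -val_eqE /= neq_ltn hik orbT.
  by rewrite mul0r addr0 mulr0n mulr0 subr0.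
rewrite (big_nth 0) big_mkord.
rewrite (eq_bigr (fun i : 'I_(size t) => -1 * ('X - (t`_i)%:P))); last first.
  by move=> i _; rewrite !mxE !eqxx mul1r (_ : ((i : nat).+1 == i) = false) ?addr0 ?mulr1n ?mulr1 ?mulN1r ?opprB //; apply/negbTE; rewrite neq_ltn ltnSn orbT.
by rewrite big_split /= prodr_const card_ord -mul_polyC rmorphXn rmorphN1.
Qed.

Lemma poly_id (F : numClosedFieldType) (a : F) s' k : (k < (size s').+1)%N ->
  'X * Dpoly s' k = (k == 0)%:R *: Dpoly (a :: s') 0 +
    \sum_(l < (size s').+1) (((l : nat) == k)%:R * (a :: s')`_k + ((l : nat).+1 == k)%:R) *: Dpoly s' l.
Proof.
move=> hk.
rewrite (eq_bigr (fun l : 'I__ => ((l : nat) == k)%:R *: ((a :: s')`_k *: Dpoly s' l)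
   + ((l : nat).+1 == k)%:R *: Dpoly s' l)); last by move=> l _; rewrite scalerDl scalerA.
rewrite big_split /= (@sum_delta F _ (fun l => (a :: s')`_k *: Dpoly s' l)) //.
case: k hk => [|k] hk /=.
  rewrite big1 ?addr0; last by move=> l _; rewrite scale0r.
  rewrite scale1r (@Dpoly_rec F (a :: s') 0) // Dpoly_cons /=.
  by rewrite -mul_polyC mulrBl subrK.
rewrite scale0r add0r.
under eq_bigr do rewrite eqSS.
rewrite (@sum_delta F _ (fun l => Dpoly s' l)) ?(ltnW hk) //.
rewrite (@Dpoly_rec F s' k) //.
by rewrite -mul_polyC mulrBl addrC subrK.
Qed.

Lemma col_ext (F : numClosedFieldType) m p (X Y : 'M[F]_(m, p)) :
  (forall k, col k X = col k Y) -> X = Y.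
Proof.
move=> h; apply/matrixP => i k; have := congr1 (fun v : 'cV[F]_m => v i 0) (h k).
by rewrite /= !mxE.
Qed.

Theorem lemma3p1 (F : numClosedFieldType) (n j : nat)
  (A : 'M[F]_n) (C : 'rV[F]_n) (s : seq F) :
  size s = j ->
  (forall z, z \in s -> ~~ eigenvalue (ctrmx A) z) ->
  variant (ctrmx A) (rkrylov (ctrmx A) (ctrmx C) (map Some s)) ->
  exists (h : 'rV[F]_j) (Hm : 'M[F]_j) (Z : 'M[F]_(n, j)),
    [/\ upper_triangular Hm,
        \rank Z = j,
        colspan_is Z (rkrylov (ctrmx A) (ctrmx C) (map Some s)) &
        RAD_associated (ctrmx A) (ctrmx C) s (row_mx (ctrmx C) Z)
          (col_mx (0 : 'M[F]_(1, j)) (1%:M : 'M[F]_j)) (col_mx h Hm)].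
Proof.
move=> hs heig hvar.
case: n A C heig hvar => [|n] A C heig hvar.
  exfalso; apply: hvar => v Pv.
  by have -> : ctrmx A *m v = v by rewrite [LHS]flatmx0 [RHS]flatmx0.
case: s hs heig hvar => [|a s'] hs heig hvar.
  exfalso; apply: hvar => v [p [hp ->]].
  have p0 : p = 0 by apply/eqP; rewrite -size_poly_eq0 -leqn0.
  exists 0; split; first by rewrite size_poly0.
  by rewrite p0 /peval size_poly0 !big_ord0 !mulmx0 !mul0mx mulmx0.
subst j.
set Mv := ctrmx A; set b := ctrmx C; set t := a :: s'.
have hQ : horner_mx Mv (\prod_(x <- t) ('X - x%:P)) \in unitmx := @unit_Q F n Mv t heig.
have Kj_eq : forall v, rkrylov Mv b (map Some t) v <-> Kj Mv b t v.
  by move=> v; rewrite /rkrylov /Kj size_map qmat_horner; split => -[p [hp ->]];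
    exists p; rewrite peval_horner.
have Kaug_eq : forall v, rkrylov_aug Mv b (map Some t) v <->
    exists p : {poly F}, (size p <= (size t).+1)%N /\ v = phi Mv b t p.
  by move=> v; rewrite /rkrylov_aug /rkrylov qmat_None qmat_horner /= size_map; split => -[p [hp ->]];
    exists p; rewrite peval_horner.
have hnz : forall p : {poly F}, (size p <= (size t).+1)%N ->
    horner_mx Mv p *m b = 0 -> p = 0.
  move=> p hp hb; apply/eqP; apply: contraT => p0; exfalso; apply: hvar.
  move=> v /Kj_eq Kv; apply/Kj_eq; exact: (@key F n Mv b t hQ p p0 hp hb).
pose Z := \matrix_(i < n.+1, k < (size s').+1) (phi Mv b t (Dpoly s' k)) i 0.
pose Vm := \matrix_(i < n.+1, k < (size t).+1) (phi Mv b t (Dpoly t k)) i 0.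
pose Hm := Hmat t (size t).
pose h : 'rV[F]_(size t) := \row_k (((k : nat) == 0%N)%:R).
exists h, Hm, Z.
have hV : row_mx b Z = Vm.
  apply/matrixP => i k; rewrite [Vm i k]mxE [row_mx b Z i k]mxE.
  case: splitP => [k0 hk|k1 hk].
    by rewrite hk (ord1 k0) /= (@phi_D0 F n Mv b t hQ).
  by rewrite [Z i k1]mxE hk.
have hVK : row_mx b Z *m col_mx (0 : 'M[F]_(1, size t)) (1%:M : 'M[F]_(size t)) = Z.
  by rewrite mul_row_col mulmx0 add0r mulmx1.
have colZ : forall k : 'I_(size t), col k Z = phi Mv b t (Dpoly s' k).
  by move=> k; apply/colP => i; rewrite !mxE.
have rankZ : \rank Z = size t.
  apply: rank_inj => y hy.
  have hp := @phi_mat F n Mv b t (size s') (Dpoly s') y.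
  rewrite -/Z hy in hp.
  have h0 := hnz _ (leqW (@size_Dsum F s' (fun k => y (inord k) 0)))
    (@phi0 F n Mv b t hQ _ (esym hp)).
  apply/colP => k; rewrite mxE.
  have := @indep_D F s' (fun k => y (inord k) 0) h0 k (ltn_ord k).
  by rewrite /= inord_val.
have rankV : \rank (row_mx b Z) = (size t).+1.
  rewrite hV; apply: rank_inj => y hy.
  have hp := @phi_mat F n Mv b t (size t) (Dpoly t) y.
  rewrite -/Vm hy in hp.
  have h0 := hnz _ (@size_Dsum F t (fun k => y (inord k) 0))
    (@phi0 F n Mv b t hQ _ (esym hp)).
  apply/colP => k; rewrite mxE.
  have := @indep_D F t (fun k => y (inord k) 0) h0 k (ltn_ord k).
  by rewrite /= inord_val.
have spanZ : colspan_is Z (rkrylov Mv b (map Some t)).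
  move=> v; split.
    move=> /Kj_eq [p [hp ->]]; have [c hc] := @span_D F s' p hp.
    exists (\col_k c k); rewrite /Z phi_mat hc; congr (phi _ _ _ _).
    by apply: eq_bigr => k _; rewrite mxE inordK.
  move=> [x ->]; apply: (proj2 (Kj_eq _)).
  exists (\sum_(k < (size s').+1) x (inord k) 0 *: Dpoly s' k); split.
    exact: (@size_Dsum F s' (fun k => x (inord k) 0)).
  by rewrite /Z phi_mat.
have spanV : colspan_is (row_mx b Z) (rkrylov_aug Mv b (map Some t)).
  move=> v; rewrite hV; split.
    move=> /Kaug_eq [p [hp ->]]; have [c hc] := @span_D F t p hp.
    exists (\col_k c k); rewrite /Vm phi_mat hc; congr (phi _ _ _ _).
    by apply: eq_bigr => k _; rewrite mxE inordK.
  move=> [x ->]; apply: (proj2 (Kaug_eq _)).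
  exists (\sum_(k < (size t).+1) x (inord k) 0 *: Dpoly t k); split.
    exact: (@size_Dsum F t (fun k => x (inord k) 0)).
  by rewrite /Vm phi_mat.
have lowH : lowerblk (col_mx h Hm) = Hm := col_mxKd _ _.
have lowK : lowerblk (col_mx (0 : 'M[F]_(1, size t)) (1%:M : 'M[F]_(size t))) = 1%:M
  := col_mxKd _ _.
have pen := @pencil_Hmat F t.
have sgn0 : ((-1) ^+ (size t) : F) != 0 by rewrite expf_neq0 // oppr_eq0 oner_eq0.
have colM : forall p q r (X : 'M[F]_(p, q)) (Y : 'M[F]_(q, r)) k,
    col k (X *m Y) = X *m col k Y by move=> *; rewrite !colE mulmxA.
split.
- exact: Hmat_ut.
- exact: rankZ.
- exact: spanZ.
split.
- split.
  + have eRC : row_mx b Z *m col_mx h Hm = b *m h + Z *m Hm := mul_row_col b Z h Hm.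
    rewrite -mulmxA hVK eRC.
    apply: col_ext => k.
    rewrite colM colZ (@phi_X F n Mv b t hQ).
    rewrite colE mulmxDl -!mulmxA -!colE.
    rewrite (mx11_scalar (col k h)) mul_mx_scalar [(col k h) 0 0]mxE [h 0 k]mxE.
    have -> : (((k : nat) == 0%N)%:R *: b) = phi Mv b t (((k : nat) == 0%N)%:R *: Dpoly t 0).
      by rewrite phiZ (@phi_D0 F n Mv b t hQ).
    rewrite /Z phi_mat.
    under eq_bigr => l _ do rewrite !mxE (inordK (ltn_ord l)).
    rewrite -phiD; congr (phi _ _ _ _); exact: poly_id.
  + exact: rankV.
  + split.
      move=> i k hik; rewrite mxE; case: splitP => [i0 _|i1 hi1]; first by rewrite mxE.
      rewrite mxE (_ : (i1 == k) = false) ?mulr0n //.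
      apply/negbTE; rewrite -val_eqE /= neq_ltn; apply/orP; right.
      by move: hik; rewrite hi1 add1n ltnS.
    move=> i k hik; rewrite mxE; case: splitP => [i0 hi0|i1 hi1].
      by move: hik; rewrite hi0 (ord1 i0).
    apply: Hmat_ut.
    by move: hik; rewrite hi1 add1n ltnS.
  + rewrite /regular_pencil lowH lowK pen scaler_eq0 (negbTE sgn0) /=.
    apply: monic_neq0; exact: monic_prod_XsubC.
  + move=> z; rewrite lowH lowK pen rootZ // root_prod_XsubC => hz; exact: heig.
- split; first by [].
  by rewrite lowH lowK; exists ((-1) ^+ size t).
- exists 1; first exact: oner_neq0.
  rewrite hV scale1r; apply/colP => i; rewrite [col _ _ _ _]mxE [Vm _ _]mxE /=.
  by rewrite (@phi_D0 F n Mv b t hQ).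
- exact: spanV.
- rewrite hVK; exact: spanZ.
Qed.
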